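(* Let $t>0$, let $X,Y\subset\mathbb{R}^D$ be finite sets and $Q=X\cap Y$. Then $X$ and $Y$ are magnitude-equivalent at scale $t$ if and only if $\mathbf{w}^t_X(z)=\mathbf{w}^t_Y(z)$ for all $z\in Q$, $\mathbf{w}^t_X(z)=0$ for all $z\in X\setminus Q$, and $\mathbf{w}^t_Y(z)=0$ for all $z\in Y\setminus Q$.
   Context: For a finite set $A\subset\mathbb{R}^D$ and $t>0$, the matrix $\zeta_{tA}(x,y)=\exp(-t\|x-y\|)$ ($x,y\in A$) is invertible and $\mathbf{w}^t_A=\zeta_{tA}^{-1}\mathbb{1}$ is the weighting vector of $A$ at scale $t$ (the unique vector with $\sum_{y\in A}\zeta_{tA}(x,y)\mathbf{w}^t_A(y)=1$ for all $x\in A$). Finite $X,Y\subset\mathbb{R}^D$ are magnitude-equivalent at scale $t$ if $\{x\in X:\mathbf{w}^t_X(x)\neq0\}=\{y\in Y:\mathbf{w}^t_Y(y)\neq0\}$. *)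

(* Defs.v *)
From HB Require Import structures.
From mathcomp Require Import all_boot all_order all_algebra.
From mathcomp Require Import finmap.
From mathcomp Require Import reals.
From mathcomp Require Import sequences exp.
Set Implicit Arguments. Unset Strict Implicit. Unset Printing Implicit Defensive.
Import Order.TTheory GRing.Theory Num.Theory.
Local Open Scope ring_scope.
Local Open Scope fset_scope.

Section Magnitude.
Variables (R : realType) (D : nat).

Definition pt := 'rV[R]_D.

Definition edist (x y : pt) : R :=
  Num.sqrt (\sum_(i < D) (x ord0 i - y ord0 i) ^+ 2).

Definition ptA (A : {fset pt}) (i : nat) : pt := nth 0 (enum_fset A) i.

Definition zeta (t : R) (A : {fset pt}) : 'M[R]_(size (enum_fset A)) :=
  \matrix_(i, j) expR (- (t * edist (ptA A i) (ptA A j))).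

Definition weightvec (t : R) (A : {fset pt}) : 'cV[R]_(size (enum_fset A)) :=
  invmx (zeta t A) *m const_mx 1.

(* w^t_A(x) for x in A (value 0 outside A, never used there) *)
Definition weight (t : R) (A : {fset pt}) (x : pt) : R :=
  \sum_(i < size (enum_fset A) | ptA A i == x) weightvec t A i ord0.

Definition wsupport (t : R) (A : {fset pt}) : {fset pt} :=
  [fset x in A | weight t A x != 0].

Definition magnitude_equivalent (t : R) (X Y : {fset pt}) : Prop :=
  wsupport t X = wsupport t Y.

End Magnitude.

(* Main.v *)
Require Import Defs.
From HB Require Import structures.
From mathcomp Require Import all_boot all_order all_algebra.
From mathcomp Require Import finmap.
From mathcomp Require Import reals.
From mathcomp Require Import sequences exp.
From mathcomp Require Import boolp classical_sets topology normedtype derive realfun.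
From mathcomp Require Import ring lra functions.
Set Implicit Arguments. Unset Strict Implicit. Unset Printing Implicit Defensive.
Import Order.TTheory GRing.Theory Num.Theory.
Import numFieldNormedType.Exports.
Local Open Scope ring_scope.

Section PSD.
Variables (R : realType) (I : finType).
Implicit Types (M : I -> I -> R) (c : I -> R).

Definition qf M c := \sum_i \sum_j c i * c j * M i j.
Definition psd M := forall c, 0 <= qf M c.
Definition symm M := forall i j, M i j = M j i.

Lemma qfD M1 M2 c : qf (fun i j => M1 i j + M2 i j) c = qf M1 c + qf M2 c.
Proof. rewrite /qf -big_split; apply: eq_bigr => i _; rewrite -big_split; apply: eq_bigr => j _; by rewrite mulrDr. Qed.

Lemma qfZ a M c : qf (fun i j => a * M i j) c = a * qf M c.
Proof. rewrite /qf mulr_sumr; apply: eq_bigr => i _; rewrite mulr_sumr; apply: eq_bigr => j _.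
by rewrite mulrCA. Qed.

Lemma qf_scale d M c : qf (fun i j => d i * d j * M i j) c = qf M (fun i => c i * d i).
Proof. rewrite /qf; apply: eq_bigr => i _; apply: eq_bigr => j _.
by rewrite !mulrA; congr (_ * _); rewrite -!mulrA; congr (_ * _); rewrite mulrCA. Qed.

Lemma psdD M1 M2 : psd M1 -> psd M2 -> psd (fun i j => M1 i j + M2 i j).
Proof. by move=> h1 h2 c; rewrite qfD addr_ge0. Qed.

Lemma psdZ a M : 0 <= a -> psd M -> psd (fun i j => a * M i j).
Proof. by move=> a0 h c; rewrite qfZ mulr_ge0. Qed.

Lemma psd_scale d M : psd M -> psd (fun i j => d i * d j * M i j).
Proof. by move=> h c; rewrite qf_scale. Qed.

Lemma psd_ext M1 M2 : (forall i j, M1 i j = M2 i j) -> psd M1 -> psd M2.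
Proof. move=> e h c; have -> : M2 = M1 by apply/funext=> i; apply/funext=> j; rewrite e.
exact: h. Qed.

Lemma psd_ones : psd (fun _ _ => 1).
Proof. move=> c; rewrite /qf.
have -> : \sum_i \sum_j c i * c j * 1 = (\sum_i c i) ^+ 2.
  rewrite expr2 mulr_suml; apply: eq_bigr => i _; rewrite mulr_sumr.
  by apply: eq_bigr => j _; rewrite mulr1.
exact: sqr_ge0. Qed.

Lemma psd_rank1 (v : I -> R) : psd (fun i j => v i * v j).
Proof. apply: (@psd_ext (fun i j => v i * v j * 1)); first by move=> *; rewrite mulr1.
exact/psd_scale/psd_ones. Qed.

Lemma psd_sum (J : finType) (Ms : J -> I -> I -> R) :
  (forall k, psd (Ms k)) -> psd (fun i j => \sum_k Ms k i j).
Proof. move=> h c; rewrite /qf.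
have -> : \sum_i \sum_j c i * c j * (\sum_k Ms k i j) = \sum_k qf (Ms k) c.
  rewrite /qf [RHS]exchange_big /=; apply: eq_bigr => i _ /=.
  rewrite [RHS]exchange_big; apply: eq_bigr => j _ /=; by rewrite mulr_sumr.
by apply: sumr_ge0 => k _; apply: h. Qed.

Lemma psd_gram (J : finType) (v : I -> J -> R) : psd (fun i j => \sum_k v i k * v j k).
Proof. by apply: psd_sum => k; apply: psd_rank1. Qed.

Lemma sum_delta k (F : I -> R) : \sum_i ((i == k)%:R * F i) = F k.
Proof. rewrite (bigD1 k) //= eqxx mul1r big1 ?addr0 // => i /negbTE ->; by rewrite mul0r. Qed.

Lemma qf_delta M c k x : symm M ->
  qf M (fun i => c i + x * (i == k)%:R) =
  qf M c + 2 * x * (\sum_i c i * M i k) + x ^+ 2 * M k k.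
Proof.
move=> sM; rewrite /qf.
have E : forall i j, (c i + x * (i == k)%:R) * (c j + x * (j == k)%:R) * M i j =
   c i * c j * M i j + (x * ((i == k)%:R * (c j * M i j)) + x * ((j == k)%:R * (c i * M i j)))
   + x ^+ 2 * ((i == k)%:R * ((j == k)%:R * M i j)).
  by move=> i j; rewrite expr2; ring.
rewrite (eq_bigr (fun i => \sum_j (c i * c j * M i j + (x * ((i == k)%:R * (c j * M i j)) + x * ((j == k)%:R * (c i * M i j)))
   + x ^+ 2 * ((i == k)%:R * ((j == k)%:R * M i j))))); last by move=> i _; apply: eq_bigr => j _; exact: E.
rewrite (eq_bigr (fun i => \sum_j c i * c j * M i j + (x * \sum_j ((i == k)%:R * (c j * M i j)) + x * (c i * M i k))
   + x ^+ 2 * ((i == k)%:R * M i k))); last first.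
  move=> i _; rewrite !big_split /= -!mulr_sumr; congr (_ + (_ + _) + _).
    under eq_bigr do rewrite mulrCA; rewrite -mulr_sumr.
    by rewrite sum_delta.
  by rewrite sum_delta.
rewrite !big_split /= -!mulr_sumr sum_delta -!addrA; congr (_ + _).
rewrite exchange_big /=. under eq_bigr do rewrite sum_delta.
rewrite addrA; congr (_ + _).
have -> : \sum_i c i * M k i = \sum_i c i * M i k by apply: eq_bigr => i _; rewrite sM.
ring.
Qed.

Lemma psd_diag M k : psd M -> 0 <= M k k.
Proof. move=> h; have := h (fun i => (i == k)%:R).
have := @qf_delta M (fun _ => 0) k 1.
Abort.


Lemma qf_ones c : qf (fun _ _ => 1) c = (\sum_i c i) ^+ 2.
Proof. rewrite /qf expr2 mulr_suml; apply: eq_bigr => i _; rewrite mulr_sumr.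
by apply: eq_bigr => j _; rewrite mulr1. Qed.

Lemma qf_rank1 (v : I -> R) c : qf (fun i j => v i * v j) c = (\sum_i c i * v i) ^+ 2.
Proof. rewrite -qf_ones -qf_scale /qf; do 2 (apply: eq_bigr => ? _); by rewrite mulr1. Qed.

Lemma qf0 M : qf M (fun _ => 0) = 0.
Proof. by rewrite /qf big1 // => i _; rewrite big1 // => j _; rewrite !mul0r. Qed.

Lemma qf_delta1 M k : symm M -> qf M (fun i => (i == k)%:R) = M k k.
Proof. move=> sM; have := @qf_delta M (fun _ => 0) k 1 sM.
rewrite qf0 big1 ?mulr0 ?add0r ?expr1n ?mul1r; last by move=> *; rewrite mul0r.
by move=> <-; congr qf; apply/funext => i; rewrite add0r mul1r. Qed.

Lemma psd_diag M k : symm M -> psd M -> 0 <= M k k.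
Proof. by move=> sM h; rewrite -qf_delta1 //. Qed.

Lemma psd_diag0 M k j : symm M -> psd M -> M k k = 0 -> M j k = 0.
Proof.
move=> sM h Mkk; apply/eqP; apply/negP => /negP nz.
have := h (fun i => (i == j)%:R + (- (M j j + 1) / (2 * M j k)) * (i == k)%:R).
rewrite qf_delta // qf_delta1 // Mkk mulr0 addr0.
rewrite (bigD1 j) //= eqxx mul1r big1 ?addr0; last by move=> i /negbTE ->; rewrite mul0r.
have -> : 2 * (- (M j j + 1) / (2 * M j k)) * M j k = - (M j j + 1).
  by field.
by move=> H; lra.
Qed.

Lemma psd_zero : psd (fun _ _ => 0).
Proof. by move=> c; rewrite /qf big1 // => i _; rewrite big1 // => j _; rewrite mulr0. Qed.

Lemma invr_gt0_pf (x : R) : 0 < x -> 0 < x^-1. Proof. by rewrite invr_gt0. Qed.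

Lemma schur A B : symm B -> psd A -> psd B -> psd (fun i j => A i j * B i j).
Proof.
move=> sB hA hB.
move: {2}#|[set i | B i i != 0]| (leqnn #|[set i | B i i != 0]|) => n.
elim: n B sB hB => [|n IH] B sB hB hn.
  apply: (@psd_ext (fun _ _ => 0)); last exact: psd_zero.
  move=> i j; have : B j j = 0.
    apply/eqP; apply: contraTT hn => nz; rewrite -ltnNge; apply/card_gt0P.
    by exists j; rewrite inE.
  by move/(psd_diag0 i sB hB); rewrite sB => ->; rewrite mulr0.
case: (pickP [pred k | B k k != 0]) => [k /= Bk|none]; last first.
  apply: (IH B sB hB); rewrite (_ : [set i | B i i != 0] = finset.set0) ?cards0 //.
  by apply/setP => i; rewrite inE finset.in_set0; exact: none.
have Bk0 : 0 < B k k by rewrite lt_neqAle eq_sym Bk (psd_diag k sB hB).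
pose B' i j := B i j - B i k * B j k / B k k.
have sB' : symm B' by move=> i j; rewrite /B' (sB i j) [B i k * _]mulrC.
have hB' : psd B'.
  move=> c; have := hB (fun i => c i + (- (\sum_i c i * B i k) / B k k) * (i == k)%:R).
  rewrite qf_delta // /B'.
  have -> : qf (fun i j => B i j - B i k * B j k / B k k) c =
      qf B c + (- (B k k)^-1) * qf (fun i j => B i k * B j k) c.
    by rewrite -qfZ -qfD; congr qf; apply/funext => i; apply/funext => j; rewrite mulrC mulNr mulrA.
  rewrite qf_rank1.
  suff -> : qf B c + 2 * (- (\sum_i c i * B i k) / B k k) * (\sum_i c i * B i k) +
    (- (\sum_i c i * B i k) / B k k) ^+ 2 * B k k = qf B c + - (B k k)^-1 * (\sum_i c i * B i k) ^+ 2 by [].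
  by field; rewrite gt_eqF.
have hn' : (#|[set i | B' i i != 0%R]| <= n)%N.
  have sub : [set i | B' i i != 0] \subset [set i | B i i != 0] :\ k.
    apply/fintype.subsetP => i; rewrite !inE /B'; apply: contraNT; rewrite negb_and negbK.
    case/orP => [/eqP ->|/negPn/eqP z]; first by rewrite mulrK ?subrr // unitfE.
    by rewrite z (sB i k) (psd_diag0 k sB hB z) mulr0 mul0r subrr.
  have h := subset_leq_card sub.
  have := cardsD1 k [set i | B i i != 0]; rewrite inE Bk /= => e.
  rewrite -ltnS; apply: leq_trans hn; by rewrite e add1n ltnS.
have := psdD (IH B' sB' hB' hn') (psdZ (ltW (invr_gt0_pf Bk0)) (psd_scale (fun i => B i k) hA)).
apply: psd_ext => i j; rewrite /B'; field; by rewrite gt_eqF.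
Qed.

End PSD.
Section PSD2.
Local Open Scope classical_set_scope.
Local Open Scope ring_scope.
Variables (R : realType) (I : finType).
Implicit Types (M : I -> I -> R) (c : I -> R).

Lemma psd_lim (Ms : nat -> I -> I -> R) M :
  (forall n, psd (Ms n)) -> (forall i j, (fun n => Ms n i j) @ \oo --> M i j) -> psd M.
Proof.
move=> hM hc c.
have cv : (fun n => qf (Ms n) c) @ \oo --> qf M c.
  apply: cvg_big => [|i _]; first exact: add_continuous.
  apply: cvg_big => [|j _]; first exact: add_continuous.
  by apply: cvgMr; apply: hc.
rewrite -(cvg_lim _ cv) //; apply: limr_ge; first by apply/cvg_ex; exists (qf M c).
by near=> n; apply: hM.
Unshelve. all: by end_near.
Qed.

Lemma psd_hpow M k : symm M -> psd M -> psd (fun i j => M i j ^+ k).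
Proof.
move=> sM hM; elim: k => [|k IH].
  by apply: (@psd_ext _ _ (fun _ _ => 1)); [move=> i j; rewrite expr0 | exact: psd_ones].
apply: (@psd_ext _ _ (fun i j => M i j ^+ k * M i j)); first by move=> i j; rewrite exprSr.
exact: schur.
Qed.

Lemma psd_exp M : symm M -> psd M -> psd (fun i j => expR (M i j)).
Proof.
move=> sM hM; have := (@psd_lim (fun n i j => series (exp_coeff (M i j)) n) (fun i j => expR (M i j))); apply.
  move=> n; apply: (@psd_ext _ _ (fun i j => \sum_(k < n) (k`!%:R)^-1 * M i j ^+ k)).
    move=> i j; rewrite /series /= big_mkord; apply: eq_bigr => k _.
    by rewrite /exp_coeff /= mulrC.
  apply: psd_sum => k; apply: psdZ; first by rewrite invr_ge0.
  exact: psd_hpow.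
move=> i j; rewrite /expR; apply: cvg_toP => //.
exact: is_cvg_series_exp_coeff.
Qed.

End PSD2.
Section Sqrt.
Local Open Scope classical_set_scope.
Local Open Scope ring_scope.
Variable R : realType.

Fixpoint sqit (g : R) (k : nat) : R :=
  if k is k'.+1 then (g + sqit g k' ^+ 2) / 2 else 0.

Lemma sqit_cvg (g : R) : 0 <= g <= 1 ->
  sqit g @ \oo --> 1 - Num.sqrt (1 - g).
Proof.
case/andP => g0 g1.
set L := 1 - Num.sqrt (1 - g).
have s0 : 0 <= Num.sqrt (1 - g) by apply: sqrtr_ge0.
have ss : Num.sqrt (1 - g) ^+ 2 = 1 - g by rewrite sqr_sqrtr // subr_ge0.
have s1 : Num.sqrt (1 - g) <= 1.
  by rewrite -[X in _ <= X]sqrtr1 ler_sqrt //; lra.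
have L0 : 0 <= L by rewrite /L subr_ge0.
have LL : (g + L ^+ 2) / 2 = L.
  have e : (g + L ^+ 2) / 2 - L = (Num.sqrt (1 - g) ^+ 2 - (1 - g)) / 2 by rewrite /L; field.
  by apply/eqP; rewrite -subr_eq0 e ss subrr mul0r.
have bnd : forall k, 0 <= sqit g k <= L.
  elim => [|k /andP[a b]] /=; first by rewrite lexx L0.
  apply/andP; split; first by apply: divr_ge0 => //; apply: addr_ge0 => //; apply: sqr_ge0.
  rewrite -[X in _ <= X]LL ler_pM2r ?invr_gt0 ?ltr0n // lerD2l.
  by rewrite ler_pXn2r // ?nnegrE // (le_trans a b).
have mono : forall k, sqit g k <= sqit g k.+1.
  elim => [|k IH] /=; first by apply: divr_ge0 => //; rewrite expr2 mul0r addr0.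
  rewrite ler_pM2r ?invr_gt0 ?ltr0n // lerD2l ler_pXn2r // ?nnegrE //.
  - by case/andP: (bnd k).
  - by case/andP: (bnd k.+1).
have nd : nondecreasing_seq (sqit g) by apply/nondecreasing_seqP.
have ub : has_ubound (range (sqit g)) by exists L => _ [k _ <-]; case/andP: (bnd k).
have cv := nondecreasing_cvgn nd ub.
set l := sup _ in cv.
have cv1 : (fun k => sqit g k.+1) @ \oo --> l by rewrite cvg_shiftS.
have cv2 : (fun k => (g + sqit g k ^+ 2) / 2) @ \oo --> (g + l ^+ 2) / 2.
  apply: cvgMr_tmp; apply: cvgD; first exact: cvg_cst.
  by rewrite expr2; under eq_fun do rewrite expr2; apply: cvgM.
have fix1 : (g + l ^+ 2) / 2 = l by rewrite -(cvg_lim _ cv2) // -(cvg_lim _ cv1).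
have lL : l <= L.
  rewrite -(cvg_lim _ cv) //; apply: limr_le; first by apply: cvgP cv.
  by near=> k; case/andP: (bnd k).
have l0 : 0 <= l.
  rewrite -(cvg_lim _ cv) //; apply: limr_ge; first by apply: cvgP cv.
  by near=> k; case/andP: (bnd k).
suff -> : L = l by [].
have e1 : (1 - l) ^+ 2 = 1 - g.
  have h2 : 2 * l = g + l ^+ 2 by rewrite -[X in 2 * X]fix1; field.
  apply/eqP; rewrite -subr_eq0; apply/eqP.
  have -> : (1 - l) ^+ 2 - (1 - g) = (g + l ^+ 2) - 2 * l by ring.
  by rewrite -h2 subrr.
have : Num.sqrt ((1 - l) ^+ 2) = 1 - l by rewrite sqrtr_sqr ger0_norm // subr_ge0 (le_trans lL) // /L; lra.
rewrite e1 => e2; rewrite /L e2; lra.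
Unshelve. all: by end_near.
Qed.

End Sqrt.
Section Kernel.
Local Open Scope classical_set_scope.
Local Open Scope ring_scope.
Variables (R : realType) (D : nat) (I : finType).

Definition sqd (x y : 'rV[R]_D) : R := \sum_(k < D) (x ord0 k - y ord0 k) ^+ 2.

Lemma sqd_ge0 x y : 0 <= sqd x y.
Proof. by apply: sumr_ge0 => k _; apply: sqr_ge0. Qed.

Lemma edist_sqd x y : @Defs.edist R D x y = Num.sqrt (sqd x y).
Proof. by []. Qed.

Lemma sqdC x y : sqd x y = sqd y x.
Proof. by apply: eq_bigr => k _; rewrite -sqrrN opprB. Qed.

Lemma edistC x y : @Defs.edist R D x y = @Defs.edist R D y x.
Proof. by rewrite !edist_sqd sqdC. Qed.

Lemma psd_sqrtG (G : I -> I -> R) : symm G -> psd G -> (forall i j, 0 <= G i j <= 1) ->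
  psd (fun i j => 1 - Num.sqrt (1 - G i j)).
Proof.
move=> sG hG b; apply: (@psd_lim _ _ (fun n i j => sqit (G i j) n)); last first.
  by move=> i j; apply: sqit_cvg.
elim => [|n IH] /=; first exact: psd_zero.
have sF : symm (fun i j => sqit (G i j) n) by move=> i j; rewrite sG.
have := psdZ (a := 2^-1) (ltW (invr_gt0_pf (ltr0n R 2))) (psdD hG (schur sF IH IH)).
by apply: psd_ext => i j; rewrite mulrC expr2.
Qed.

Lemma psd_gauss (p : I -> 'rV[R]_D) (e : R) : 0 <= e ->
  psd (fun i j => expR (- (e * sqd (p i) (p j)))).
Proof.
move=> e0.
pose a i := \sum_(k < D) p i ord0 k ^+ 2.
pose M i j := 2 * e * \sum_(k < D) p i ord0 k * p j ord0 k.
have sM : symm M by move=> i j; rewrite /M; congr (_ * _); apply: eq_bigr => k _; rewrite mulrC.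
have hM : psd M by apply: psdZ; [rewrite mulr_ge0 // | apply: (psd_gram (fun i k => p i ord0 k))].
have := psd_scale (fun i => expR (- (e * a i))) (psd_exp sM hM).
apply: psd_ext => i j; rewrite -!expRD; congr expR.
rewrite /M /a /sqd.
have -> : \sum_(k < D) (p i ord0 k - p j ord0 k) ^+ 2 =
   \sum_(k < D) p i ord0 k ^+ 2 + \sum_(k < D) p j ord0 k ^+ 2 - 2 * \sum_(k < D) p i ord0 k * p j ord0 k.
  rewrite mulr_sumr -!big_split -sumrN -big_split /=; apply: eq_bigr => k _; ring.
ring.
Qed.

Lemma exp_bounds (x : R) : 0 <= x -> x - x ^+ 2 <= 1 - expR (- x) <= x.
Proof.
move=> x0; apply/andP; split; last first.
  by have := expR_ge1Dx (- x); lra.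
have h1 : expR (- x) <= (1 + x)^-1.
  rewrite expRN lef_pV2 ?posrE ?expR_gt0 //; last by lra.
  exact: expR_ge1Dx.
have h2 : (1 + x)^-1 <= 1 - x + x ^+ 2.
  rewrite -[X in X <= _]mul1r ler_pdivrMr; last by lra.
  have -> : (1 - x + x ^+ 2) * (1 + x) = 1 + x ^+ 3 by ring.
  by rewrite lerDl exprn_ge0.
by lra.
Qed.


Lemma h_cvg (s : R) : 0 <= s ->
  (fun n => (n.+1 ^ 2)%:R * (1 - expR (- (((n.+1 ^ 2)%:R)^-1 * s)))) @ \oo --> s.
Proof.
move=> s0.
apply: (@squeeze_cvgr _ _ _ _ (fun n => s - s ^+ 2 * harmonic n) (fun _ => s)).
- near=> n.
  set m : R := (n.+1 ^ 2)%:R.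
  have m0 : 0 < m by rewrite ltr0n expn_gt0.
  have mn : n.+1%:R <= m by rewrite ler_nat expnS expn1 leq_pmulr.
  have x0 : 0 <= m^-1 * s by rewrite mulr_ge0 // invr_ge0 ltW.
  have /andP[b1 b2] := exp_bounds x0.
  have e1 : m * (m^-1 * s) = s by rewrite mulrA mulfV ?gt_eqF // mul1r.
  apply/andP; split; last first.
    by rewrite -[X in _ <= X]e1 ler_wpM2l // ltW.
  apply: le_trans (ler_wpM2l (ltW m0) b1).
  rewrite mulrBr e1 lerB // /harmonic /=.
  have -> : m * (m^-1 * s) ^+ 2 = s ^+ 2 * m^-1 by field; apply: lt0r_neq0; have := ler0n R n; lra.
  rewrite ler_wpM2l ?sqr_ge0 // lef_pV2 ?posrE //; by rewrite ltr0n.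
- have := cvgB (cvg_cst s) (cvgMl_tmp (a := s ^+ 2) (@cvg_harmonic R)).
  by rewrite mulr0 subr0; apply; exact: eventually_filter.
- exact: cvg_cst.
Unshelve. all: by end_near.
Qed.

Lemma psd_kernel (p : I -> 'rV[R]_D) (t : R) : 0 <= t ->
  psd (fun i j => expR (- (t * @Defs.edist R D (p i) (p j)))).
Proof.
move=> t0.
pose m n : R := (n.+1 ^ 2)%:R.
pose G n i j := expR (- ((m n)^-1 * sqd (p i) (p j))).
pose lam n : R := t * n.+1%:R.
apply: (@psd_lim _ _ (fun n i j => expR (- lam n) * expR (lam n * (1 - Num.sqrt (1 - G n i j))))).
- move=> n; apply: psdZ; first exact: expR_ge0.
  apply: psd_exp.
    by move=> i j; rewrite /G sqdC.
  apply: psdZ; first by rewrite /lam mulr_ge0.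
  apply: psd_sqrtG.
  + by move=> i j; rewrite /G sqdC.
  + by apply: psd_gauss; rewrite invr_ge0 ler0n.
  + move=> i j; rewrite /G expR_ge0 /= expR_le1 oppr_le0.
    by rewrite mulr_ge0 ?sqd_ge0 // invr_ge0 ler0n.
- move=> i j.
  have E : forall n, expR (- lam n) * expR (lam n * (1 - Num.sqrt (1 - G n i j))) =
      expR (- (t * Num.sqrt (m n * (1 - G n i j)))).
    move=> n; rewrite -expRD; congr expR.
    have -> : m n = n.+1%:R ^+ 2 by rewrite /m natrX.
    rewrite sqrtrM ?sqr_ge0 // sqrtr_sqr ger0_norm ?ler0n // /lam; ring.
  have -> : (fun n => expR (- lam n) * expR (lam n * (1 - Num.sqrt (1 - G n i j)))) =
     (fun n => expR (- (t * Num.sqrt (m n * (1 - G n i j))))) by apply/funext => n; exact: E.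
  have hcv := h_cvg (sqd_ge0 (p i) (p j)).
  have c1 := continuous_cvg eventually_filter (@sqrt_continuous R _) hcv.
  have c2 : (fun n => - (t * Num.sqrt (m n * (1 - G n i j)))) @ \oo -->
      - (t * Num.sqrt (sqd (p i) (p j))).
    by apply: cvgN; apply: cvgMl_tmp; exact: c1.
  exact: (continuous_cvg eventually_filter (@continuous_expR R _) c2).
Qed.

End Kernel.
Section Opt.
Variables (R : realType) (I : finType).
Lemma sum_option (F : option I -> R) : \sum_(o : option I) F o = F None + \sum_i F (Some i).
Proof.
rewrite (bigD1 None) //=; congr (_ + _).
rewrite (@reindex_omap _ _ _ _ _ Some id) /=; last by case.
by apply: eq_bigl => i; rewrite eqxx.
Qed.
End Opt.
Section Strict.
Local Open Scope ring_scope.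
Variables (R : realType) (D : nat) (I : finType).

Definition kk (t : R) (x y : 'rV[R]_D) := expR (- (t * @Defs.edist R D x y)).

Lemma kk_refl t x : kk t x x = 1.
Proof. rewrite /kk /Defs.edist big1 ?sqrtr0 ?mulr0 ?oppr0 ?expR0 // => k _.
by rewrite subrr expr0n. Qed.

Lemma kkC t x y : kk t x y = kk t y x.
Proof. by rewrite /kk edistC. Qed.

Lemma kernel_f0 (p : I -> 'rV[R]_D) t c : 0 <= t ->
  qf (fun i j => kk t (p i) (p j)) c = 0 -> forall y, \sum_j c j * kk t y (p j) = 0.
Proof.
move=> t0 q0 y.
set f := \sum_j c j * kk t y (p j).
pose q (o : option I) := if o is Some i then p i else y.
pose d (o : option I) := if o is Some i then c i else - f.
have hk : psd (fun o o' => kk t (q o) (q o')) := psd_kernel q t0.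
have := hk d.
rewrite /qf sum_option.
rewrite (eq_bigr (fun i => d (Some i) * d None * kk t (q (Some i)) (q None) +
    \sum_j d (Some i) * d (Some j) * kk t (q (Some i)) (q (Some j)))); last first.
  by move=> i _; rewrite sum_option.
rewrite sum_option big_split /= -/(qf _ c) q0 addr0 kk_refl mulr1.
have -> : \sum_i c i * - f * kk t (p i) y = - f * f.
  rewrite /f mulr_sumr; apply: eq_bigr => i _; rewrite kkC /kk; ring.
have -> : \sum_i - f * c i * kk t y (p i) = - f * f.
  rewrite /f mulr_sumr; apply: eq_bigr => i _; rewrite /kk; ring.
move=> h; have : f ^+ 2 <= 0 by move: h; rewrite expr2; lra.
by move=> h2; apply/eqP; rewrite -sqrf_eq0 eq_le h2 sqr_ge0.
Qed.

End Strict.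
Section Smooth.
Local Open Scope classical_set_scope.
Local Open Scope ring_scope.
Variable R : realType.

Lemma cvg_expquot (t : R) : 0 <= t ->
  (fun n => (1 - expR (- (t * harmonic n))) / harmonic n) @ \oo --> t.
Proof.
move=> t0.
apply: (@squeeze_cvgr _ _ _ _ (fun n => t - t ^+ 2 * harmonic n) (fun _ => t)).
- near=> n.
  have h0 : 0 < harmonic n :> R by apply: harmonic_gt0.
  have /andP[b1 b2] := exp_bounds (mulr_ge0 t0 (ltW h0)).
  apply/andP; split.
    rewrite ler_pdivlMr //; apply: le_trans b1; rewrite mulrBl; apply: lerB => //.
    by rewrite expr2 !mulrA [t * harmonic n * t]mulrC !mulrA.
  by rewrite ler_pdivrMr.
- have := cvgB (cvg_cst t) (cvgMl_tmp (a := t ^+ 2) (@cvg_harmonic R)).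
  by rewrite mulr0 subr0; apply; exact: eventually_filter.
- exact: cvg_cst.
Unshelve. all: by end_near.
Qed.

Lemma nonsmooth (t c : R) (phi : R -> R) : 0 < t -> derivable phi 0 1 ->
  (forall s, c * expR (- (t * `|s|)) + phi s = 0) -> c = 0.
Proof.
move=> t0 dphi E.
have phiE s : phi s = - (c * expR (- (t * `|s|))) by apply/eqP; rewrite -addr_eq0 addrC E.
set F := fun h : R => h^-1 *: ((phi \o shift 0) (h *: 1) - phi 0).
have FL : F x @[x --> 0^'] --> 'D_1 phi 0 by apply: cvg_toP dphi _.
have /cvgr_dnbhsP FL' := FL.
have u1 := FL' (fun n => harmonic n).
have u2 := FL' (fun n => - harmonic n).
have Fh : forall h, F h = c * ((1 - expR (- (t * `|h|))) / h).
  move=> h; rewrite /F /= addr0 [_%:A]mulr1 !phiE normr0 mulr0 oppr0 expR0 mulr1.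
  rewrite [_ *: _]mulrC; ring.
have hQ := cvg_expquot (ltW t0).
have A1 : (fun n => F (harmonic n)) @ \oo --> c * t.
  have -> : (fun n => F (harmonic n)) =
      (fun n => c * ((1 - expR (- (t * harmonic n))) / harmonic n)).
    by apply/funext => n; rewrite Fh ger0_norm // harmonic_ge0.
  by apply: cvgMl_tmp.
have A2 : (fun n => F (- harmonic n)) @ \oo --> - (c * t).
  have -> : (fun n => F (- harmonic n)) =
      (fun n => - (c * ((1 - expR (- (t * harmonic n))) / harmonic n))).
    by apply/funext => n; rewrite Fh normrN ger0_norm ?harmonic_ge0 // invrN mulrN mulrN.
  by apply: cvgN; apply: cvgMl_tmp.
have hn0 : forall n, harmonic n != 0 :> R by move=> n; apply: lt0r_neq0; apply: harmonic_gt0.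
have B1 := u1 (conj hn0 (@cvg_harmonic R)).
have B2 : F (- harmonic n) @[n --> \oo] --> 'D_1 phi 0.
  apply: u2; split; first by move=> n; rewrite oppr_eq0.
  by rewrite -oppr0; apply: cvgN; apply: cvg_harmonic.
have e1 : c * t = 'D_1 phi 0 by rewrite -(cvg_lim _ A1) // (cvg_lim _ B1).
have e2 : - (c * t) = 'D_1 phi 0 by rewrite -(cvg_lim _ A2) // (cvg_lim _ B2).
have : c * t = 0 by move: e1 e2; lra.
by move/eqP; rewrite mulf_eq0 (gt_eqF t0) orbF => /eqP.
Qed.


End Smooth.
Section Deriv.
Local Open Scope classical_set_scope.
Local Open Scope ring_scope.
Variable R : realType.
Lemma dpoly (A a : R) : derivable (fun s : R => A + 2 * a * s + s ^+ 2) 0 1.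
Proof.
have h1 := @derivableD R R^o R^o (cst A) (cst (2 * a) * id) 0 1 (derivable_cst _ _ _)
   (@derivableM R R^o (cst (2 * a)) id 0 1 (derivable_cst _ _ _) (@derivable_id R R^o 0 1)).
have h2 := @derivableD R R^o R^o (cst A + cst (2 * a) * id) (id ^+ 2) 0 1 h1
   (@derivableX R R^o id 2 0 1 (@derivable_id R R^o 0 1)).
exact: h2.
Qed.
End Deriv.
Section Deriv2.
Local Open Scope classical_set_scope.
Local Open Scope ring_scope.
Variable R : realType.

Lemma derivable_phi (A a t : R) : 0 < A ->
  derivable (fun s : R => expR (- (t * Num.sqrt (A + 2 * a * s + s ^+ 2)))) 0 1.
Proof.
move=> A0.
pose P := fun s : R => A + 2 * a * s + s ^+ 2.
have dP : differentiable P 0 by apply/derivable1_diffP; exact: dpoly.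
have P0 : P 0 = A by rewrite /P mulr0 addr0 expr0n /= addr0.
have dS : differentiable (@Num.sqrt R) (P 0).
  apply/derivable1_diffP; apply: (@ex_derive _ _ _ _ _ _ (2 * Num.sqrt (P 0))^-1).
  by apply: is_derive1_sqrt; rewrite P0.
have dl : differentiable (fun y : R => - (t * y)) (Num.sqrt (P 0)).
  apply/derivable1_diffP.
  have h := @derivableN R R^o R^o (cst t * id) (Num.sqrt (P 0)) 1
     (@derivableM R R^o (cst t) id _ 1 (derivable_cst _ _ _) (@derivable_id R R^o _ 1)).
  exact: h.
have de : differentiable (@expR R) (- (t * Num.sqrt (P 0))).
  by apply/derivable1_diffP; apply: derivable_expR.
have d1 := @differentiable_comp R R^o R^o R^o P (@Num.sqrt R) 0 dP dS.
have d2 := @differentiable_comp R R^o R^o R^o (Num.sqrt \o P) (fun y : R => - (t * y)) 0 d1 dl.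
have d3 := @differentiable_comp R R^o R^o R^o ((fun y : R => - (t * y)) \o (Num.sqrt \o P)) (@expR R) 0 d2 de.
by apply/derivable1_diffP; exact: d3.
Qed.

End Deriv2.
Section Deriv3.
Local Open Scope classical_set_scope.
Local Open Scope ring_scope.
Variable R : realType.

Lemma derivable_sum (J : Type) (r : seq J) (P : pred J) (f : J -> R -> R) (x : R) :
  (forall j, P j -> derivable (f j) x 1) ->
  derivable (fun s => \sum_(j <- r | P j) f j s) x 1.
Proof.
move=> h; elim: r => [|j r IH].
  have -> : (fun s => \sum_(j <- [::] | P j) f j s) = cst 0 by apply/funext => s; rewrite big_nil.
  exact: derivable_cst.
case: (boolP (P j)) => Pj.
  have -> : (fun s => \sum_(i <- j :: r | P i) f i s) = (fun s => f j s + \sum_(i <- r | P i) f i s).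
    by apply/funext => s; rewrite big_cons Pj.
  have := @derivableD R R^o R^o (f j) (fun s => \sum_(i <- r | P i) f i s) x 1 (h j Pj) IH.
  by [].
have -> : (fun s => \sum_(i <- j :: r | P i) f i s) = (fun s => \sum_(i <- r | P i) f i s).
  by apply/funext => s; rewrite big_cons (negbTE Pj).
exact: IH.
Qed.

End Deriv3.
Section Strict2.
Local Open Scope classical_set_scope.
Local Open Scope ring_scope.
Variables (R : realType) (D : nat) (I : finType).

Lemma sqd_shift (k0 : 'I_D) (x y : 'rV[R]_D) (s : R) :
  sqd (x + s *: \row_k ((k == k0)%:R)) y = sqd x y + 2 * (x ord0 k0 - y ord0 k0) * s + s ^+ 2.
Proof.
rewrite /sqd.
rewrite (eq_bigr (fun k => (x ord0 k - y ord0 k) ^+ 2 + ((k == k0)%:R * (2 * (x ord0 k - y ord0 k) * s)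
   + (k == k0)%:R * s ^+ 2))); last first.
  by move=> k _; rewrite !mxE; case: (k == k0) => /=; ring.
by rewrite !big_split /= !sum_delta addrA.
Qed.

Lemma sqd_pos (x y : 'rV[R]_D) : x != y -> 0 < sqd x y.
Proof.
move=> xy; rewrite lt_neqAle sqd_ge0 andbT eq_sym; apply: contra xy => /eqP h.
apply/eqP/matrixP => i k; rewrite [i]ord1.
have := @psumr_eq0P _ _ _ (fun k => (x ord0 k - y ord0 k) ^+ 2) (fun k _ => sqr_ge0 (x ord0 k - y ord0 k)) h k isT.
by move/eqP; rewrite sqrf_eq0 subr_eq0 => /eqP.
Qed.

Lemma kernel_strict (p : I -> 'rV[R]_D) (t : R) (c : I -> R) : 0 < t -> injective p ->
  qf (fun i j => kk t (p i) (p j)) c = 0 -> forall i, c i = 0.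
Proof.
move=> t0 pinj q0 i0.
have f0 := kernel_f0 (ltW t0) q0.
case: (posnP D) => [D0 | Dpos].
  have allEq : forall x y : 'rV[R]_D, x = y.
    move=> x y; apply/matrixP => i k; case: k => k hk; exfalso; move: hk; by rewrite D0.
  have := f0 (p i0); rewrite (bigD1 i0) //= kk_refl mulr1 big1 ?addr0 //.
  move=> j ji; exfalso; move/eqP: ji; apply; apply: pinj; exact: allEq.
pose k0 : 'I_D := Ordinal Dpos.
pose e : 'rV[R]_D := \row_k ((k == k0)%:R).
apply: (@nonsmooth R t (c i0) (fun s => \sum_(j | j != i0) c j * kk t (p i0 + s *: e) (p j))) => //.
  apply: derivable_sum => j ji.
  have Apos : 0 < sqd (p i0) (p j).
    by apply: sqd_pos; apply: contra ji => /eqP /pinj ->.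
  have := @derivableM R R^o (cst (c j)) _ 0 1 (derivable_cst _ _ _)
     (derivable_phi (a := p i0 ord0 k0 - p j ord0 k0) (t := t) Apos).
  suff -> : (fun s => c j * kk t (p i0 + s *: e) (p j)) =
     (cst (c j) * (fun s : R => expR (- (t * Num.sqrt (sqd (p i0) (p j) + 2 * (p i0 ord0 k0 - p j ord0 k0) * s + s ^+ 2))))) by [].
  apply/funext => s.
  change (c j * expR (- (t * Num.sqrt (sqd (p i0 + s *: e) (p j)))) =
     c j * expR (- (t * Num.sqrt (sqd (p i0) (p j) + 2 * (p i0 ord0 k0 - p j ord0 k0) * s + s ^+ 2)))).
  by rewrite sqd_shift.
move=> s; have := f0 (p i0 + s *: e); rewrite (bigD1 i0) //= => h; apply: etrans h; congr (_ + _).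
congr (_ * _); rewrite /kk; congr (expR (- (t * _))).
change (`|s| = Num.sqrt (sqd (p i0 + s *: e) (p i0))).
rewrite sqd_shift /sqd big1; last by move=> k _; rewrite subrr expr0n.
by rewrite subrr mulr0 !mul0r !add0r sqrtr_sqr.
Qed.

End Strict2.
Section Main.
Local Open Scope ring_scope.
Variables (R : realType) (D : nat).
Implicit Types (A : {fset 'rV[R]_D}).

Definition ssum A (F : 'rV[R]_D -> R) := \sum_(x <- enum_fset A) F x.

Lemma ssum_ord A F : \sum_(i < size (enum_fset A)) F (ptA A i) = ssum A F.
Proof. by rewrite /ssum (big_nth 0) big_mkord. Qed.

Lemma ptA_inj A : injective (fun i : 'I_(size (enum_fset A)) => ptA A i).
Proof.
move=> i j /eqP; rewrite /ptA nth_uniq ?fset_uniq // => /eqP h; exact: val_inj.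
Qed.

Lemma ptA_in A (i : 'I_(size (enum_fset A))) : ptA A i \in A.
Proof. exact: mem_nth. Qed.

Lemma zeta_unit (t : R) A : 0 < t -> zeta t A \in unitmx.
Proof.
move=> t0; rewrite unitmxE unitfE; apply/negP => /det0P [v v0 vZ].
move/negP: v0; apply; apply/eqP/rowP => i; rewrite mxE.
apply: (@kernel_strict R D _ (fun i : 'I_(size (enum_fset A)) => ptA A i) t (fun i => v 0 i) t0 (@ptA_inj A)).
rewrite /qf (eq_bigr (fun i => v 0 i * (v *m zeta t A) 0 i)); last first.
  move=> j _; rewrite mxE mulr_sumr; apply: eq_bigr => k _.
  by rewrite /zeta mxE kkC /kk; ring.
by rewrite vZ big1 // => j _; rewrite mxE mulr0.
Qed.

Lemma weight_ptA t A (i : 'I_(size (enum_fset A))) :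
  weight t A (ptA A i) = weightvec t A i ord0.
Proof.
rewrite /weight (bigD1 i) //= big1 ?addr0 // => j /andP[/eqP e ji].
by exfalso; move/eqP: ji; apply; apply: ptA_inj.
Qed.

Lemma weight_out t A x : x \notin A -> weight t A x = 0.
Proof.
move=> xA; rewrite /weight big1 // => j /eqP e; exfalso; move/negP: xA; apply.
by rewrite -e ptA_in.
Qed.

Lemma weight_eq t A x : 0 < t -> x \in A -> ssum A (fun y => kk t x y * weight t A y) = 1.
Proof.
move=> t0 xA.
have ix : (index x (enum_fset A) < size (enum_fset A))%N by rewrite index_mem.
pose i := Ordinal ix.
have xi : ptA A i = x by rewrite /ptA nth_index.
have E : zeta t A *m weightvec t A = const_mx 1 by apply: mulKVmx; exact: zeta_unit.
have := congr1 (fun M : 'cV_(size (enum_fset A)) => M i ord0) E; rewrite /= !mxE => <-.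
rewrite -ssum_ord; apply: eq_bigr => j _; rewrite weight_ptA /zeta [in RHS]mxE xi.
by [].
Qed.

End Main.
Local Open Scope fset_scope.

Lemma wsuppE (R : realType) (D : nat) (t : R) (A : {fset 'rV[R]_D}) x :
  (x \in wsupport t A) = (x \in A) && (weight t A x != 0).
Proof. by rewrite /wsupport !inE. Qed.

Theorem lemmaB3 (R : realType) (D : nat) (t : R) (X Y : {fset 'rV[R]_D}) :
  0 < t ->
  (magnitude_equivalent t X Y <->
   [/\ (forall z, z \in X `&` Y -> weight t X z = weight t Y z),
       (forall z, z \in X `\` (X `&` Y) -> weight t X z = 0)
     & (forall z, z \in Y `\` (X `&` Y) -> weight t Y z = 0)]).
Proof.
move=> t0; split; last first.
  case=> h1 h2 h3; rewrite /magnitude_equivalent; apply/fsetP => x; rewrite !wsuppE.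
  case xX: (x \in X); case xY: (x \in Y) => //=.
  - by rewrite h1 // in_fsetI xX xY.
  - by rewrite h2 ?eqxx // in_fsetD in_fsetI xX xY.
  - by rewrite h3 ?eqxx // in_fsetD in_fsetI xX xY.
rewrite /magnitude_equivalent => eqS.
have outX : forall z, z \in X -> z \notin Y -> weight t X z = 0.
  move=> z zX zY; have : z \notin wsupport t Y by rewrite wsuppE (negbTE zY).
  by rewrite -eqS wsuppE zX /= negbK => /eqP.
have outY : forall z, z \in Y -> z \notin X -> weight t Y z = 0.
  move=> z zY zX; have : z \notin wsupport t X by rewrite wsuppE (negbTE zX).
  by rewrite eqS wsuppE zY /= negbK => /eqP.
set S := wsupport t X.
have SX : S `<=` X by apply/fsubsetP => x; rewrite wsuppE => /andP[].
have SY : S `<=` Y by apply/fsubsetP => x; rewrite /S eqS wsuppE => /andP[].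
pose d y := weight t X y - weight t Y y.
have eq0 : forall x, x \in S -> ssum S (fun y => kk t x y * d y) = 0.
  move=> x xS.
  have eX : ssum S (fun y => kk t x y * weight t X y) = 1.
    rewrite -(weight_eq t0 (fsubsetP SX x xS)) /ssum; apply: big_fset_incl => // y yX yS.
    move: yS; rewrite wsuppE yX /= negbK => /eqP ->; by rewrite mulr0.
  have eY : ssum S (fun y => kk t x y * weight t Y y) = 1.
    rewrite -(weight_eq t0 (fsubsetP SY x xS)) /ssum; apply: big_fset_incl => // y yY yS.
    move: yS; rewrite /S eqS wsuppE yY /= negbK => /eqP ->; by rewrite mulr0.
  move: eX eY; rewrite /ssum /d => eX eY.
  rewrite (eq_bigr (fun y => kk t x y * weight t X y - kk t x y * weight t Y y)); last first.
    by move=> y _; rewrite mulrBr.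
  by rewrite sumrB eX eY subrr.
have d0 : forall x, x \in S -> d x = 0.
  move=> x xS.
  have ix : (index x (enum_fset S) < size (enum_fset S))%N by rewrite index_mem.
  have xi : ptA S (Ordinal ix) = x by rewrite /ptA nth_index.
  rewrite -xi.
  apply: (@kernel_strict R D _ (fun i : 'I_(size (enum_fset S)) => ptA S i) t
     (fun i => d (ptA S i)) t0 (@ptA_inj R D S)).
  rewrite /qf big1 // => i _.
  rewrite (eq_bigr (fun j : 'I_(size (enum_fset S)) => d (ptA S i) * (kk t (ptA S i) (ptA S j) * d (ptA S j)))); last first.
    by move=> j _; ring.
  by rewrite -mulr_sumr (ssum_ord S (fun y => kk t (ptA S i) y * d y)) eq0 ?mulr0 // ptA_in.
split.
- move=> z; rewrite in_fsetI => /andP[zX zY].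
  case zS: (z \in S).
    by apply/eqP; rewrite -subr_eq0; apply/eqP; apply: d0.
  have wx : weight t X z = 0 by apply/eqP; move/negbT: (zS); rewrite /S wsuppE zX /= negbK.
  have wy : weight t Y z = 0 by apply/eqP; move/negbT: (zS); rewrite /S eqS wsuppE zY /= negbK.
  by rewrite wx wy.
- move=> z; rewrite in_fsetD in_fsetI negb_and => /andP[/orP[] h zX]; first by rewrite zX in h.
  exact: outX.
- move=> z; rewrite in_fsetD in_fsetI negb_and => /andP[/orP[] h zY]; last by rewrite zY in h.
  exact: outY.
Qed.
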